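(* Let $(X,d)$ be a compact metric space, $\mathbb{F}=\{f_n:n\in\mathbb{N}\}$ a sequence of continuous surjective self-maps of $X$, and $k\in\mathbb{N}$. If $(X,\mathbb{F})$ is syndetically (resp. cofinitely) sensitive then $(X,\mathbb{F}_k)$ is syndetically (resp. cofinitely) sensitive. If the family $\mathbb{F}$ is feeble open, then $(X,\mathbb{F}_k)$ syndetically (resp. cofinitely) sensitive implies $(X,\mathbb{F})$ syndetically (resp. cofinitely) sensitive.
   Context: Write $\omega_n=f_n\circ\cdots\circ f_1$ and, for $n>k$, $\omega^k_n=f_n\circ\cdots\circ f_{k+1}$; $\mathbb{F}_k=\{f_n:n\ge k+1\}$ is the truncated family. $(X,\mathbb{F})$ is syndetically sensitive if there is $\delta>0$ such that for every non-empty open $U$ the set $\{n\in\mathbb{N}:\mathrm{diam}(\omega_n(U))>\delta\}$ is syndetic (has bounded gaps); it is cofinitely sensitive if there is $\delta>0$ such that for every non-empty open $U$ there is $K$ with $\mathrm{diam}(\omega_n(U))>\delta$ for all $n\ge K$. The same notions for $(X,\mathbb{F}_k)$ use $\omega^k_n$ ($n>k$). $\mathbb{F}$ is feeble open if for every non-empty open $U$ and every $f\in\mathbb{F}$, $f(U)$ has non-empty interior. *)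

(* Defs.v *)
From HB Require Import structures.
From mathcomp Require Import all_boot all_order all_algebra.
From mathcomp Require Import all_classical all_reals all_analysis.
Set Implicit Arguments. Unset Strict Implicit. Unset Printing Implicit Defensive.
Import Order.TTheory GRing.Theory Num.Theory.
Local Open Scope classical_set_scope.
Local Open Scope ring_scope.

Section Defs.
Context {R : realType} {X : metricType R}.

Definition diam (A : set X) : R := sup [set mdist x y | x in A & y in A].

(* The family F = {f_n : n >= 1} is given by f : nat -> X -> X (f 0 unused).
   omega f k n = f_n o ... o f_(k+1) for n > k (identity otherwise);
   omega f 0 n = omega_n = f_n o ... o f_1. *)
Fixpoint omega (f : nat -> X -> X) (k n : nat) (x : X) : X :=
  match n with
  | 0 => x
  | m.+1 => if (k < m.+1)%N then f m.+1 (omega f k m x) else x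
  end.

Definition syndetic (S : set nat) : Prop :=
  exists L : nat, forall m : nat, exists n : nat, (m <= n <= m + L)%N /\ S n.

Definition synd_sensitive_k (f : nat -> X -> X) (k : nat) : Prop :=
  exists delta : R, 0 < delta /\
    forall U : set X, open U -> U !=set0 ->
      syndetic [set n | (k < n)%N /\ delta < diam (omega f k n @` U)].

Definition cof_sensitive_k (f : nat -> X -> X) (k : nat) : Prop :=
  exists delta : R, 0 < delta /\
    forall U : set X, open U -> U !=set0 ->
      exists K : nat, forall n : nat, (K <= n)%N -> (k < n)%N ->
        delta < diam (omega f k n @` U).

Definition feeble_open (f : nat -> X -> X) : Prop :=
  forall n : nat, (0 < n)%N -> forall U : set X, open U -> U !=set0 ->
    (f n @` U)^° !=set0.

End Defs.

(* Main.v *)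
Require Import Defs.
From HB Require Import structures.
From mathcomp Require Import all_boot all_order all_algebra.
From mathcomp Require Import all_classical all_reals all_analysis.
From mathcomp Require Import zify.
Import Order.TTheory GRing.Theory Num.Theory.
Local Open Scope classical_set_scope.
Local Open Scope ring_scope.


Section PX.
Variables (R : realType) (X : metricType R) (x0 : X).
Definition PX : Type := X.
HB.instance Definition _ := Topological.on PX.
HB.instance Definition _ := isPointed.Build PX x0.
Lemma PXcover : compact [set: X] -> cover_compact [set: PX].
Proof. move=> h; rewrite -compact_cover; exact: h. Qed.
End PX.

Lemma dist_bounded (R : realType) (X : metricType R) (x0 : X) :
  compact [set: X] -> exists M : R, forall x y : X, mdist x y <= M.
Proof.
move=> /(@PXcover R X x0) Xco.
have covX : [set: X] `<=` \bigcup_(n in [set: nat]) (ball x0 n%:R)°.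
  move=> y _; exists (Num.truncn (mdist x0 y)).+2 => //.
  rewrite /interior /=; apply/nbhs_ballP; exists 1; first exact: ltr01. move=> z yz.
  idtac.
  have xy : ball x0 (Num.truncn (mdist x0 y)).+1%:R y.
    by rewrite ballEmdist /=; exact: truncnS_gt.
  have := ball_triangle xy yz.
  by move=> h; rewrite -natr1.
have [D _ DcovX] := Xco _ _ _ (fun i _ => @open_interior _ _) covX.
pose N := (\max_(i <- finmap.enum_fset D) i)%N.
have HN : forall y, ball x0 N%:R y.
  move=> y; have [n Dn yn] := DcovX y I.
  have := interior_subset yn; rewrite !ballEmdist /= => H.
  apply: (lt_le_trans H); rewrite ler_nat.
  exact: (@leq_bigmax_seq _ _ xpredT id).
exists (N%:R + N%:R) => x y.
have := ball_triangle (ball_sym (HN x)) (HN y).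
by rewrite ballEmdist /= => /ltW.
Qed.
Section Om.
Variables (R : realType) (X : metricType R) (f : nat -> X -> X).

Lemma omega_split k n x : (k <= n)%N ->
  omega f 0 n x = omega f k n (omega f 0 k x).
Proof.
elim: n => [|m IH] hk.
  by move: hk; rewrite leqn0 => /eqP ->.
have [->|hkm] := eqVneq k m.+1.
  by rewrite /= ltnn.
have hk' : (k <= m)%N by rewrite -ltnS ltn_neqAle hkm hk.
by rewrite /= ?ltn0Sn ?ltnS ?hk' IH.
Qed.

Lemma omega0_cont : (forall n, (0 < n)%N -> continuous (f n)) ->
  forall n, continuous (omega f 0 n).
Proof.
move=> hc; elim=> [|m IH].
  have -> : omega f 0 0 = id by apply/funext.
  by move=> x; exact: cvg_id.
have -> : omega f 0 m.+1 = f m.+1 \o omega f 0 m by apply/funext => x /=.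
move=> x; apply: continuous_comp; first exact: IH.
exact: hc.
Qed.

Lemma omega0_surj : (forall n, (0 < n)%N -> forall y, exists x, f n x = y) ->
  forall n y, exists x, omega f 0 n x = y.
Proof.
move=> hs; elim=> [|m IH] y; first by exists y.
have [z <-] := hs m.+1 isT y.
have [x <-] := IH z.
by exists x.
Qed.

Lemma omega0_feeble : feeble_open f -> forall U : set X, open U -> U !=set0 ->
  forall n, exists V : set X, [/\ open V, V !=set0 & V `<=` omega f 0 n @` U].
Proof.
move=> hfo U oU nU; elim=> [|m [V [oV nV sV]]].
  by exists U; split => // x Ux; exists x.
exists (f m.+1 @` V)°; split.
- exact: open_interior.
- exact: hfo.
- move=> y /interior_subset [z /sV [x Ux <-] <-].
  by exists x.
Qed.

End Om.

Lemma diam_mono (R : realType) (X : metricType R) (A B : set X) (d : R) :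
  compact [set: X] -> A `<=` B -> 0 < d -> d < diam A -> d < diam B.
Proof.
move=> hX AB d0 dA.
have hsA : has_sup [set mdist x y | x in A & y in A].
  apply: contrapT => /sup_out hA.
  by move: dA; rewrite /diam hA => /(lt_trans d0); rewrite ltxx.
have h0 : 0 < diam A - d by rewrite subr_gt0.
have [e [x Ax [y Ay <-]] he] := sup_adherent h0 hsA.
have [M hM] := @dist_bounded R X x hX.
rewrite opprB addrC subrK in he.
apply: (lt_le_trans he).
apply: sup_upper_bound; last by exists x; [exact: AB|exists y; [exact: AB|]].
split; first by exists (mdist x y), x; [exact: AB|exists y; [exact: AB|]].
by exists M => _ [u _ [v _ <-]].
Qed.

Theorem mainTheorem7 (R : realType) (X : metricType R) (f : nat -> X -> X)
  (k : nat) :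
  compact [set: X] ->
  (forall n : nat, (0 < n)%N -> continuous (f n)) ->
  (forall n : nat, (0 < n)%N -> forall y : X, exists x : X, f n x = y) ->
  ((synd_sensitive_k f 0 -> synd_sensitive_k f k) /\
   (cof_sensitive_k f 0 -> cof_sensitive_k f k)) /\
  (feeble_open f ->
   (synd_sensitive_k f k -> synd_sensitive_k f 0) /\
   (cof_sensitive_k f k -> cof_sensitive_k f 0)).
Proof.
move=> hX hc hs.
have hW : forall U : set X, open U -> U !=set0 ->
    exists W : set X, [/\ open W, W !=set0 &
      forall n, (k <= n)%N -> omega f 0 n @` W = omega f k n @` U].
  move=> U oU [u Uu].
  exists (omega f 0 k @^-1` U); split.
  - apply: open_comp => // x _; exact: (@omega0_cont R X f hc).
  - have [x hx] := @omega0_surj R X f hs k u.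
    by exists x; rewrite /= hx.
  - move=> n kn; apply/seteqP; split => y.
      case=> x Wx <-; exists (omega f 0 k x) => //.
      by rewrite (@omega_split R X f k n x kn).
    case=> v Uv <-; have [x hx] := @omega0_surj R X f hs k v.
    exists x; first by rewrite /= hx.
    by rewrite (@omega_split R X f k n x kn) hx.
have hV : feeble_open f -> forall U : set X, open U -> U !=set0 ->
    exists V : set X, [/\ open V, V !=set0 &
      forall n, (k <= n)%N -> omega f k n @` V `<=` omega f 0 n @` U].
  move=> hfo U oU nU.
  have [V [oV nV sV]] := @omega0_feeble R X f hfo U oU nU k.
  exists V; split => // n kn y [v Vv <-].
  have [x Ux hx] := sV v Vv.
  by exists x => //; rewrite (@omega_split R X f k n x kn) hx.
split; [split|move=> hfo; split].
- case=> d [d0 hd]; exists d; split => // U oU nU.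
  have [W [oW nW eW]] := hW U oU nU.
  have [L hL] := hd W oW nW.
  exists (L + k.+1)%N => m.
  have [n [/andP [h1 h2] [_ Sd]]] := hL (m + k.+1)%N.
  have kn : (k < n)%N by lia.
  exists n; split; first by apply/andP; split; lia.
  by split => //; rewrite -eW // ltnW.
- case=> d [d0 hd]; exists d; split => // U oU nU.
  have [W [oW nW eW]] := hW U oU nU.
  have [K hK] := hd W oW nW.
  exists K => n Kn kn; rewrite -eW ?(ltnW kn) //.
  by apply: hK => //; lia.
- case=> d [d0 hd]; exists d; split => // U oU nU.
  have [V [oV nV sV]] := hV hfo U oU nU.
  have [L hL] := hd V oV nV.
  exists L => m.
  have [n [hn [kn Sd]]] := hL m.
  exists n; split => //; split; first by lia.
  exact: (@diam_mono R X _ _ d hX (sV n (ltnW kn)) d0 Sd).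
- case=> d [d0 hd]; exists d; split => // U oU nU.
  have [V [oV nV sV]] := hV hfo U oU nU.
  have [K hK] := hd V oV nV.
  exists (maxn K k.+1) => n Kn _.
  have kn : (k < n)%N by lia.
  exact: (@diam_mono R X _ _ d hX (sV n (ltnW kn)) d0 (hK n (leq_trans (leq_maxl _ _) Kn) kn)).
Qed.
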